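(* Let $x=x_1\cdots x_n\in S_n$. If $x_i$ is a left-to-right minimum of $x$ and $x_i$ appears to the left of $x_j$ in $s_{132,321}(x)$, then $j<i$.
   Context: An entry $x_i$ is a left-to-right minimum of $x$ if it is smaller than every entry to its left. A permutation contains a pattern $p$ if it has a subsequence order-isomorphic to $p$; otherwise it avoids $p$. The map $s_{132,321}$ is defined as follows: the entries of the input permutation are read from left to right, with an initially empty stack. At each step, if the input is nonempty and pushing the next input entry onto the stack produces a stack whose contents, read from top to bottom, avoid both $132$ and $321$, that entry is pushed; otherwise the top entry of the stack is popped and appended to the output. When the input is exhausted, the remaining stack entries are popped one at a time to the output. $s_{132,321}(x)$ is the output word. *)

(* Defs.v *)
From mathcomp Require Import all_boot.
Set Implicit Arguments. Unset Strict Implicit. Unset Printing Implicit Defensive.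

(* Permutations are sequences of naturals; entries are 0-indexed positions. *)

Definition contains132 (s : seq nat) : bool :=
  has (fun i => has (fun j => has (fun k =>
    [&& (i < j)%N, (j < k)%N,
        (nth 0 s i < nth 0 s k)%N & (nth 0 s k < nth 0 s j)%N])
    (iota 0 (size s))) (iota 0 (size s))) (iota 0 (size s)).

Definition contains321 (s : seq nat) : bool :=
  has (fun i => has (fun j => has (fun k =>
    [&& (i < j)%N, (j < k)%N,
        (nth 0 s j < nth 0 s i)%N & (nth 0 s k < nth 0 s j)%N])
    (iota 0 (size s))) (iota 0 (size s))) (iota 0 (size s)).

(* stack is a list whose head is the top; read top-to-bottom = the list itself *)
Definition stack_ok (st : seq nat) : bool :=
  ~~ contains132 st && ~~ contains321 st.

Fixpoint pop_until (a : nat) (st out : seq nat) : seq nat * seq nat :=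
  if stack_ok (a :: st) then (st, out) else
  match st with
  | [::] => (st, out)
  | b :: st' => pop_until a st' (rcons out b)
  end.

Fixpoint run (inp st out : seq nat) : seq nat :=
  match inp with
  | [::] => out ++ st
  | a :: inp' =>
      let p := pop_until a st out in run inp' (a :: p.1) p.2
  end.

Definition s132_321 (x : seq nat) : seq nat := run x [::] [::].

Definition ltr_min (x : seq nat) (i : nat) : Prop :=
  forall k, (k < i)%N -> (nth 0 x i < nth 0 x k)%N.

(* Main.v *)
Require Import Defs.
From mathcomp Require Import all_boot.
From mathcomp Require Import zify.

Fixpoint run_st (inp st out : seq nat) : seq nat * seq nat :=
  match inp with
  | [::] => (st, out)
  | a :: inp' => let p := pop_until a st out in run_st inp' (a :: p.1) p.2
  end.

Lemma run_cat s1 s2 st out :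
  run (s1 ++ s2) st out = run s2 (run_st s1 st out).1 (run_st s1 st out).2.
Proof. by elim: s1 st out => [|a s1 IH] st out //=. Qed.

Lemma stack_ok1 a : stack_ok [:: a].
Proof. by rewrite /stack_ok /contains132 /contains321 /=. Qed.

Lemma pop_gen a st out : exists k,
  pop_until a st out = (drop k st, out ++ take k st) /\ stack_ok (a :: drop k st).
Proof.
elim: st out => [|b st IH] out /=.
  by exists 0; rewrite /= stack_ok1 cats0.
case: ifP => Hok.
  by exists 0; rewrite drop0 take0 cats0.
have [k [-> H2]] := IH (rcons out b).
by exists k.+1; rewrite /= cat_rcons.
Qed.

Definition nodesc (s : seq nat) :=
  forall j k, (j < k)%N -> (k < size s)%N -> (nth 0 s j <= nth 0 s k)%N.

Lemma nodesc_ok a s : nodesc s -> stack_ok (a :: s).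
Proof.
move=> Hs; rewrite /stack_ok /contains132 /contains321; apply/andP; split;
  apply/negP; case/hasP => i _; case/hasP => [[|j]] _; case/hasP => [[|k]] Hk;
  move=> /and4P [H1 H2 H3 H4]; rewrite mem_iota /= in Hk; try lia.
all: have := Hs j k ltac:(lia) ltac:(lia); simpl in *; lia.
Qed.

Lemma pop_above a v rest above out : nodesc (v :: rest) ->
  exists pre0 above', above = pre0 ++ above' /\
  pop_until a (above ++ v :: rest) out = (above' ++ v :: rest, out ++ pre0).
Proof.
move=> Hn; elim: above out => [|b above IH] out /=.
  exists [::], [::]; rewrite /= (nodesc_ok a _ Hn) cats0; split => //.
case: ifP => Hok.
  by exists [::], (b :: above); rewrite cats0.
have [pre0 [above' [E ->]]] := IH (rcons out b).
by exists (b :: pre0), above'; rewrite E cat_rcons.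
Qed.

Lemma phase2 v rest inp above out : nodesc (v :: rest) ->
  exists pre, run inp (above ++ v :: rest) out = pre ++ v :: rest /\
  (forall y, y \in out ++ above ++ inp -> y \in pre).
Proof.
move=> Hn; elim: inp above out => [|a inp IH] above out /=.
  by exists (out ++ above); rewrite catA; split => // y; rewrite cats0.
have [pre0 [above' [E ->]]] := pop_above a v rest above out Hn.
have [pre [H1 H2]] := IH (a :: above') (out ++ pre0).
exists pre; split; first exact: H1.
move=> y Hy; apply: H2; move: Hy; rewrite E !(mem_cat, in_cons).
by case: (y \in out); case: (y \in pre0); case: (y \in above'); case: (y == a); case: (y \in inp).
Qed.

Lemma run_st_mem inp st out y :
  y \in (run_st inp st out).1 -> y \in st ++ inp.
Proof.
elim: inp st out => [|a inp IH] st out /=; first by rewrite cats0.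
have [k [-> _]] := pop_gen a st out.
move/IH; rewrite /= !(in_cons, mem_cat) => /orP[->|/orP[/mem_drop->|->]]; by rewrite ?orbT.
Qed.

Lemma run_perm inp st out : perm_eq (run inp st out) (out ++ st ++ inp).
Proof.
elim: inp st out => [|a inp IH] st out /=; first by rewrite cats0.
have [k [-> _]] := pop_gen a st out.
apply: perm_trans (IH _ _) _.
apply/permP => p; rewrite !count_cat /=.
rewrite -{3}(cat_take_drop k st) count_cat; lia.
Qed.

Lemma phase1 v s : stack_ok (v :: s) -> (forall y, y \in s -> v < y)%N ->
  nodesc (v :: s).
Proof.
move=> /andP[H132 _] Hall [|j] [|k] //= Hjk Hk.
  by apply: ltnW; apply: Hall; apply: mem_nth.
rewrite leqNgt; apply/negP => Hgt.
move/negP: H132; apply; apply/hasP; exists 0; first by rewrite mem_iota.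
apply/hasP; exists j.+1; first by rewrite mem_iota /=; lia.
apply/hasP; exists k.+1; first by rewrite mem_iota /=; lia.
rewrite /= Hgt andbT Hjk /=.
by apply: Hall; apply: mem_nth.
Qed.

Theorem lemma3p1 (n : nat) (x : seq nat) (i j : nat) :
  perm_eq x (iota 1 n) -> (i < n)%N -> (j < n)%N ->
  ltr_min x i ->
  (index (nth 0 x i) (s132_321 x) < index (nth 0 x j) (s132_321 x))%N ->
  (j < i)%N.
Proof.
move=> Hp Hi Hj Hmin Hidx.
have Hsz : size x = n by rewrite (perm_size Hp) size_iota.
have Hres : uniq (s132_321 x).
  by rewrite (perm_uniq (run_perm x [::] [::])) /= (perm_uniq Hp) iota_uniq.
have [//|Hij|Eij] := ltngtP j i; last by rewrite Eij ltnn in Hidx.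
exfalso; move: Hidx Hres; rewrite /s132_321.
have Hix : (i < size x)%N by rewrite Hsz.
set v := nth 0 x i.
rewrite -{1 3 4}(cat_take_drop i x) (drop_nth 0 Hix) run_cat /=.
set st1 := (run_st (take i x) [::] [::]).1.
set out1 := (run_st (take i x) [::] [::]).2.
have [k [-> Hok]] := pop_gen v st1 out1.
have Hall : forall y, y \in drop k st1 -> (v < y)%N.
  move=> y /mem_drop /run_st_mem /= /(nthP 0) [m Hm <-].
  rewrite size_take Hix in Hm.
  by rewrite nth_take //; apply: Hmin.
have Hn := phase1 _ _ Hok Hall.
have [pre [E Hpre]] := phase2 v _ (drop i.+1 x) [::] (out1 ++ take k st1) Hn.
rewrite /= in E; rewrite E.
have Hjp : nth 0 x j \in pre.
  apply: Hpre; rewrite !mem_cat in_nil /=; apply/orP; right.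
  have -> : nth 0 x j = nth 0 (drop i.+1 x) (j - i.+1) by rewrite nth_drop; congr nth; clear -Hij; lia.
  apply: mem_nth; rewrite size_drop.
  rewrite Hsz; clear -Hj Hij; lia.
move=> Hlt; rewrite cat_uniq /= => /and3P [_ /norP [Hvp _] _].
rewrite !index_cat Hjp (negbTE Hvp) /= eqxx addn0 in Hlt.
move: Hlt; have := index_mem (nth 0 x j) pre; rewrite Hjp.
by move=> H1 H2; have := ltn_trans H1 H2; rewrite ltnn.
Qed.
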